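(* Let $\mathcal{U}$ be a finite set of users, $\mathcal{BS}$ a finite set of billboard slots with influence probabilities $Pr(bs,u)\in[0,1]$ for $bs\in\mathcal{BS}$, $u\in\mathcal{U}$, and $\mathcal{G}=(\mathcal{U},\mathcal{E},\mathcal{P})$ a directed social network with edge influence probabilities $\mathcal{P}:\mathcal{E}\to(0,1]$. Define, for $\mathbb{S}\subseteq\mathcal{BS}$ and $\mathcal{N}\subseteq\mathcal{U}$, $$\Phi(\mathbb{S},\mathcal{N})=\mathcal{I}(\mathbb{S})+\mathcal{I}_{\mathcal{G}}(\mathcal{N})+\Psi(\mathbb{S},\mathcal{N}),$$ where $\mathcal{I}(\mathbb{S})=\sum_{u\in\mathcal{U}}\bigl(1-\prod_{bs\in\mathbb{S}}(1-Pr(bs,u))\bigr)$, $\mathcal{I}_{\mathcal{G}}(\mathcal{N})$ is the expected number of activated nodes under the Independent Cascade model on $\mathcal{G}$ with seed set $\mathcal{N}$, and $$\Psi(\mathbb{S},\mathcal{N})=\sum_{u\in\mathcal{U}}\Bigl(1-\prod_{b\in\mathbb{S}}(1-Pr(u,b))\Bigr)\Bigl(1-\prod_{v\in\mathcal{N}}(1-Pr(u,v))\Bigr),$$ with $Pr(u,b)=Pr(b,u)$ and $Pr(u,v)$ the probability that user $u$ is activated by seed $v$. Then $\Phi$ is non-negative and monotone (in each argument), and $\Phi$ is non-bisubmodular (i.e., it is not bisubmodular in general).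
   Context: A user $u$ is influenced by billboard slot $bs$ (a billboard together with a display time interval) with probability $Pr(bs,u)$; in the paper's model $Pr(bs,u)=\mathrm{Size}(bs)/\max_{bs'}\mathrm{Size}(bs')$ when $u$'s trajectory (from a trajectory database of tuples $(u,\mathit{loc},[t_1,t_2])$) is at the billboard's location during a time interval overlapping the slot's display interval, and the slot does not influence $u$ otherwise. A bi-set function $\mathcal{F}$ on $2^{X_1}\times 2^{X_2}$ is monotone if $\mathcal{F}(A\cup\{a\},B)\ge\mathcal{F}(A,B)$ and $\mathcal{F}(A,B\cup\{b\})\ge\mathcal{F}(A,B)$ for all $A\subseteq X_1$, $B\subseteq X_2$, $a\in X_1\setminus A$, $b\in X_2\setminus B$. It is bisubmodular if for all $A\subseteq A'\subseteq X_1$, $B\subseteq B'\subseteq X_2$, $a\in X_1\setminus A'$, $b\in X_2\setminus B'$: $\mathcal{F}(A\cup\{a\},B)-\mathcal{F}(A,B)\ge\mathcal{F}(A'\cup\{a\},B')-\mathcal{F}(A',B')$ and $\mathcal{F}(A,B\cup\{b\})-\mathcal{F}(A,B)\ge\mathcal{F}(A',B'\cup\{b\})-\mathcal{F}(A',B')$. *)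

(* Defs.v *)
From HB Require Import structures.
From mathcomp Require Import all_boot all_order all_algebra.
Set Implicit Arguments. Unset Strict Implicit. Unset Printing Implicit Defensive.
Import Order.TTheory GRing.Theory Num.Theory.
Local Open Scope ring_scope.

Section Model.
Variables (R : realFieldType) (U BS : finType).

(* Independent Cascade model, live-edge formulation.  A live-edge world is a set L of
   ordered pairs; each edge is live independently with probability P,
   non-edges are never live. *)
Definition live_prob (E : rel U) (P : U -> U -> R) (L : {set U * U}) : R :=
  \prod_(x : U * U)
    (if E x.1 x.2 then (if x \in L then P x.1 x.2 else 1 - P x.1 x.2)
     else (if x \in L then 0 else 1)).

Definition live_rel (L : {set U * U}) : rel U := [rel x y | (x, y) \in L].

Definition activated (L : {set U * U}) (N : {set U}) : {set U} :=
  [set u | [exists v in N, connect (live_rel L) v u]].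

Definition IC_spread (E : rel U) (P : U -> U -> R) (N : {set U}) : R :=
  \sum_(L : {set U * U}) live_prob E P L * (#|activated L N|)%:R.

Definition act_prob (E : rel U) (P : U -> U -> R) (u v : U) : R :=
  \sum_(L : {set U * U}) live_prob E P L * (u \in activated L [set v])%:R.

Definition bb_influence (Pr : BS -> U -> R) (S : {set BS}) : R :=
  \sum_(u : U) (1 - \prod_(bs in S) (1 - Pr bs u)).

Definition Psi (Pr : BS -> U -> R) (E : rel U) (P : U -> U -> R)
    (S : {set BS}) (N : {set U}) : R :=
  \sum_(u : U) ((1 - \prod_(b in S) (1 - Pr b u)) *
                (1 - \prod_(v in N) (1 - act_prob E P u v))).

Definition Phi (Pr : BS -> U -> R) (E : rel U) (P : U -> U -> R)
    (S : {set BS}) (N : {set U}) : R :=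
  bb_influence Pr S + IC_spread E P N + Psi Pr E P S N.

End Model.

Definition bi_monotone (R : realFieldType) (X1 X2 : finType)
    (F : {set X1} -> {set X2} -> R) : Prop :=
  (forall (A : {set X1}) (B : {set X2}) (a : X1), a \notin A ->
      F A B <= F (a |: A) B) /\
  (forall (A : {set X1}) (B : {set X2}) (b : X2), b \notin B ->
      F A B <= F A (b |: B)).

Definition bisubmodular (R : realFieldType) (X1 X2 : finType)
    (F : {set X1} -> {set X2} -> R) : Prop :=
  forall (A A' : {set X1}) (B B' : {set X2}) (a : X1) (b : X2),
    A \subset A' -> B \subset B' -> a \notin A' -> b \notin B' ->
    F (a |: A) B - F A B >= F (a |: A') B' - F A' B' /\
    F A (b |: B) - F A B >= F A' (b |: B') - F A' B'.

(* Main.v *)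
Require Import Defs.
From mathcomp Require Import all_boot all_order all_algebra.
From mathcomp Require Import lra.
Import Order.TTheory GRing.Theory Num.Theory.
Local Open Scope ring_scope.

Section Aux.
Variable R : realFieldType.

Lemma sum_set_prod (T : finType) (f : T -> bool -> R) :
  \sum_(L : {set T}) \prod_x f x (x \in L) = \prod_x (f x true + f x false).
Proof.
have -> : \prod_x (f x true + f x false) = \prod_x \sum_(j : bool) f x j.
  by apply: eq_bigr => x _; rewrite big_bool.
rewrite bigA_distr_bigA /=.
rewrite (reindex (fun g : {ffun T -> bool} => [set x | g x])) /=.
  by apply: eq_bigr => g _; apply: eq_bigr => x _; rewrite inE.
exists (fun A : {set T} => [ffun x => x \in A]) => [g _|A _].
  by apply/ffunP => x; rewrite ffunE inE.
by apply/setP => x; rewrite inE ffunE.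
Qed.

Lemma prod01 (I : finType) (A : {set I}) (g : I -> R) :
  (forall i, 0 <= g i <= 1) -> 0 <= \prod_(i in A) (1 - g i) <= 1.
Proof.
move=> hg; have h1 : forall i, 0 <= 1 - g i <= 1.
  move=> i; have /andP[a b] := hg i; apply/andP; split; lra.
apply/andP; split.
  by apply: prodr_ge0 => i _; have /andP[] := h1 i.
by apply: prodr_ile1 => i _; exact: h1.
Qed.

Lemma omp_mono (I : finType) (A : {set I}) (g : I -> R) (a : I) :
  (forall i, 0 <= g i <= 1) -> a \notin A ->
  1 - \prod_(i in A) (1 - g i) <= 1 - \prod_(i in a |: A) (1 - g i).
Proof.
move=> hg aA; rewrite big_setU1 //=.
have /andP[p0 p1] : 0 <= \prod_(i in A) (1 - g i) <= 1 by apply: prod01.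
have /andP[ga0 ga1] := hg a.
set p := \prod_(i in A) _ in p0 p1 *.
nra.
Qed.

Lemma omp01 (I : finType) (A : {set I}) (g : I -> R) :
  (forall i, 0 <= g i <= 1) -> 0 <= 1 - \prod_(i in A) (1 - g i) <= 1.
Proof.
move=> hg; have /andP[p0 p1] : 0 <= \prod_(i in A) (1 - g i) <= 1 by apply: prod01.
apply/andP; split; lra.
Qed.

End Aux.

Section Model2.
Variables (R : realFieldType) (U BS : finType) (Pr : BS -> U -> R) (E : rel U)
  (P : U -> U -> R).
Hypothesis hPr : forall bs u, 0 <= Pr bs u <= 1.
Hypothesis hP : forall x y, E x y -> 0 < P x y <= 1.

Lemma live_ge0 L : 0 <= live_prob E P L.
Proof.
apply: prodr_ge0 => x _.
case hE: (E x.1 x.2); case: (x \in L) => //.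
- by have /andP[h _] := hP _ _ hE; apply: ltW.
- by have /andP[_ h] := hP _ _ hE; rewrite subr_ge0.
Qed.

Lemma sum_live : \sum_(L : {set U * U}) live_prob E P L = 1.
Proof.
pose f (x : U * U) (b : bool) : R :=
  if E x.1 x.2 then (if b then P x.1 x.2 else 1 - P x.1 x.2)
  else (if b then 0 else 1).
transitivity (\sum_(L : {set U * U}) \prod_x f x (x \in L)) => //.
rewrite sum_set_prod; apply: big1 => x _; rewrite /f.
by case: (E x.1 x.2); rewrite ?subrKC ?add0r // addrC subrK.
Qed.

Lemma act01 u v : 0 <= act_prob E P u v <= 1.
Proof.
apply/andP; split.
  by apply: sumr_ge0 => L _; apply: mulr_ge0; [apply: live_ge0|apply: ler0n].
rewrite -sum_live; apply: ler_sum => L _.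
rewrite -[X in _ <= X]mulr1; apply: ler_wpM2l; first exact: live_ge0.
by case: (_ \in _).
Qed.

Lemma IC_ge0 N : 0 <= IC_spread E P N.
Proof.
by apply: sumr_ge0 => L _; apply: mulr_ge0; [apply: live_ge0|apply: ler0n].
Qed.

Lemma Phi_ge0 S N : 0 <= Phi Pr E P S N.
Proof.
rewrite /Phi; apply: addr_ge0; first apply: addr_ge0.
- apply: sumr_ge0 => u _.
  by have /andP[] := @omp01 R BS S (fun b => Pr b u) (fun b => hPr b u).
- exact: IC_ge0.
- apply: sumr_ge0 => u _; apply: mulr_ge0.
    by have /andP[] := @omp01 R BS S (fun b => Pr b u) (fun b => hPr b u).
  by have /andP[] := @omp01 R U N (fun v => act_prob E P u v) (fun v => act01 u v).
Qed.

Lemma Phi_mono : bi_monotone (Phi Pr E P).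
Proof.
split.
- move=> A B a aA; rewrite /Phi; apply: lerD; first apply: lerD => //.
    apply: ler_sum => u _; exact: (@omp_mono R BS A (fun b => Pr b u) a (fun b => hPr b u) aA).
  apply: ler_sum => u _; apply: ler_wpM2r.
    by have /andP[] := @omp01 R U B (fun v => act_prob E P u v) (fun v => act01 u v).
  exact: (@omp_mono R BS A (fun b => Pr b u) a (fun b => hPr b u) aA).
- move=> A B b bB; rewrite /Phi; apply: lerD; first apply: lerD => //.
    apply: ler_sum => L _; apply: ler_wpM2l; first exact: live_ge0.
    rewrite ler_nat; apply: subset_leq_card; apply/subsetP => x.
    rewrite !inE => /existsP[v /andP[vB c]]; apply/existsP; exists v.
    by rewrite inE vB orbT.
  apply: ler_sum => u _; apply: ler_wpM2l.
    by have /andP[] := @omp01 R BS A (fun b => Pr b u) (fun b => hPr b u).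
  exact: (@omp_mono R U B (fun v => act_prob E P u v) b (fun v => act01 u v) bB).
Qed.

Lemma Psi_S0 S : Psi Pr E P S set0 = 0.
Proof. by rewrite /Psi big1 // => u _; rewrite big_set0 subrr mulr0. Qed.
Lemma Psi_0N N : Psi Pr E P set0 N = 0.
Proof. by rewrite /Psi big1 // => u _; rewrite big_set0 subrr mul0r. Qed.

End Model2.

Theorem theorem6 (R : realFieldType) :
  (forall (U BS : finType) (Pr : BS -> U -> R) (E : rel U) (P : U -> U -> R),
     (forall bs u, 0 <= Pr bs u <= 1) ->
     (forall x y, E x y -> 0 < P x y <= 1) ->
     (forall S N, 0 <= Phi Pr E P S N) /\ bi_monotone (Phi Pr E P)) /\
  (exists (U BS : finType) (Pr : BS -> U -> R) (E : rel U) (P : U -> U -> R),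
     (forall bs u, 0 <= Pr bs u <= 1) /\
     (forall x y, E x y -> 0 < P x y <= 1) /\
     ~ bisubmodular (Phi Pr E P)).
Proof.
split.
  move=> U BS Pr E P hPr hP; split; first exact: Phi_ge0.
  exact: Phi_mono.
pose Pr := fun (_ : unit) (_ : bool) => (1 : R).
pose E := fun (_ _ : bool) => false.
pose P := fun (_ _ : bool) => (1 : R).
have hPr : forall bs u, 0 <= Pr bs u <= 1 by move=> ? ?; rewrite /Pr ler01 lexx.
have hP : forall x y, E x y -> 0 < P x y <= 1 by [].
exists bool, unit, Pr, E, P; split => //; split => // H.
have nb : false \notin [set true] by rewrite in_set1.
have na : tt \notin (set0 : {set unit}) by rewrite in_set0.
have [H1 _] := H set0 set0 set0 [set true] tt false (sub0set _) (sub0set _) na nb.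
move: H1; rewrite setU0 /Phi.
have PsiS0 S : Psi Pr E P S set0 = 0 by apply: Psi_S0.
have Psi0N N : Psi Pr E P set0 N = 0 by apply: Psi_0N.
have act1 : act_prob E P true true = 1.
  rewrite /act_prob -[RHS](@sum_live R bool E P); apply: eq_bigr => L _.
  have -> : true \in activated L [set true].
    by rewrite inE; apply/existsP; exists true; rewrite in_set1 eqxx connect0.
  by rewrite mulr1.
have PsiTT : 1 <= Psi Pr E P [set tt] [set true].
  have -> : Psi Pr E P [set tt] [set true] = \sum_u act_prob E P u true.
    by apply: eq_bigr => u _; rewrite !big_set1 /Pr subrr subr0 mul1r opprB addrC subrK.
  rewrite (bigD1 true) //= act1 lerDl; apply: sumr_ge0 => u _.
  by have /andP[] := @act01 R bool E P hP u true.
rewrite PsiS0 Psi0N Psi0N.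
move: PsiTT; set x := Psi _ _ _ _ _; lra.
Qed.
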